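(* Let $\mathcal{R}$ be a set of rules on a finite set $Q$, and let $\mathcal{R}^*$ be the set of critical rules of $\mathcal{A}(\mathcal{R})$. Then $\mathcal{A}(\mathcal{R}^* )=\mathcal{A}(\mathcal{R})$, $|\mathcal{R}^*|\le|\mathcal{R}|$, and $l(\mathcal{R}^* )\le l(\mathcal{R})$.
   Context: A rule on $Q$ is a pair $(A,q)$ with $A\subseteq Q$, $q\in Q$; it accepts $Y\subseteq Q$ if $q\in Y$ implies $Y\cap A\neq\emptyset$. $\mathcal{K}(\mathcal{R})$ is the family of subsets accepted by all rules of $\mathcal{R}$, and $\mathcal{A}(\mathcal{R})$ is the family of $K\in\mathcal{K}(\mathcal{R})$ for which there is a sequence $\emptyset=Y_0\subseteq\dots\subseteq Y_k=K$ of members of $\mathcal{K}(\mathcal{R})$ with $|Y_{i+1}\setminus Y_i|=1$; it is an antimatroid. For an antimatroid $\mathcal{A}$, let $\mathcal{A}^*=\{Q\setminus X: X\in\mathcal{A}\}$ and $\tau(X)=\bigcap\{Y\in\mathcal{A}^*: X\subseteq Y\}$. A rule $(A,q)$ with $q\notin A$ is critical for $\mathcal{A}$ if, with $C=A\cup\{q\}$, $\tau(C)\setminus\{q\}\notin\mathcal{A}^*$ and $\tau(C)\setminus\{q,s\}\in\mathcal{A}^*$ for every $s\in A$. The size of a set of rules is $l(\mathcal{R})=\sum_{(A,q)\in\mathcal{R}}(|A|+1)$. *)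

(* Defs.v *)
From mathcomp Require Import all_boot.
Set Implicit Arguments. Unset Strict Implicit. Unset Printing Implicit Defensive.

Section Rules.
Variable Q : finType.

Definition rule := ({set Q} * Q)%type.

Definition accepts (r : rule) (Y : {set Q}) : bool :=
  (r.2 \in Y) ==> (Y :&: r.1 != set0).

Definition Kfam (R : {set rule}) : {set {set Q}} :=
  [set Y : {set Q} | [forall r in R, accepts r Y]].

Definition step (X Y : {set Q}) : bool := (X \subset Y) && (#|Y :\: X| == 1).

(* A(R): members K of K(R) reachable from the empty set by a chain
   set0 = Y_0 ⊆ ... ⊆ Y_k = K of members of K(R) adding one element at a time. *)
Definition Afam (R : {set rule}) : {set {set Q}} :=
  [set K : {set Q} | [exists n : 'I_(#|Q|.+1),
     [exists Ys : n.+1.-tuple {set Q},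
        [&& tnth Ys ord0 == set0, tnth Ys ord_max == K,
            [forall i : 'I_n.+1, tnth Ys i \in Kfam R] &
            [forall i : 'I_n, step (tnth Ys (inord i)) (tnth Ys (inord i.+1))]]]]].

Definition dualfam (F : {set {set Q}}) : {set {set Q}} := [set ~: X | X in F].

Definition tau (F : {set {set Q}}) (X : {set Q}) : {set Q} :=
  \bigcap_(Y in dualfam F | X \subset Y) Y.

Definition critical (F : {set {set Q}}) (r : rule) : bool :=
  let A := r.1 in let q := r.2 in
  let C := q |: A in
  [&& q \notin A,
      tau F C :\ q \notin dualfam F &
      [forall s in A, tau F C :\: [set q; s] \in dualfam F]].

Definition critical_rules (F : {set {set Q}}) : {set rule} :=
  [set r : rule | critical F r].

Definition rsize (R : {set rule}) : nat := \sum_(r in R) (#|r.1| + 1).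

End Rules.

(* Main.v *)
Require Import Defs.
From mathcomp Require Import all_boot.
Set Implicit Arguments. Unset Strict Implicit. Unset Printing Implicit Defensive.

Inductive reach (Q : finType) (R : {set rule Q}) : {set Q} -> Prop :=
| reach0 : reach R set0
| reachS Y x : reach R Y -> x \notin Y -> x |: Y \in Kfam R -> reach R (x |: Y).

Lemma Kfam0 (Q : finType) (R : {set rule Q}) : set0 \in Kfam R.
Proof. by rewrite inE; apply/forall_inP => r _; rewrite /accepts in_set0. Qed.

Lemma reach_K (Q : finType) (R : {set rule Q}) Y : reach R Y -> Y \in Kfam R.
Proof. by case=> [|Y' x _ _ ->]; [exact: Kfam0|]. Qed.

Lemma reach_card (Q : finType) (R : {set rule Q}) K : reach R K ->
  exists f : nat -> {set Q}, [/\ f 0 = set0, f #|K| = K,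
     (forall i, i <= #|K| -> f i \in Kfam R) &
     (forall i, i < #|K| -> step (f i) (f i.+1))].
Proof.
elim=> [|Y x rY [f [f0 fY fK fS]] xY xK].
  by exists (fun _ => set0); split=> //; rewrite cards0 // => *; exact: Kfam0.
have cx : #|x |: Y| = #|Y|.+1 by rewrite cardsU1 xY.
exists (fun i => if i <= #|Y| then f i else x |: Y); rewrite cx; split.
- by rewrite leq0n.
- by rewrite ltnn.
- by move=> i _; case: ifP => [/fK|].
- move=> i Hi; rewrite ltnS in Hi.
  case: (ltngtP i #|Y|) Hi => // [Hl|->] _.
    by apply: fS.
  rewrite fY /step subsetUr /=.
  suff -> : (x |: Y) :\: Y = [set x] by rewrite cards1.
  apply/setP=> z; rewrite !inE; case: (z =P x) => [->|] /=; [by rewrite xY | by case: (z \in Y)].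
Qed.

Lemma reach_Afam (Q : finType) (R : {set rule Q}) K : reach R K -> K \in Afam R.
Proof.
move=> rK; have [f [f0 fK fin fS]] := reach_card rK.
rewrite inE; apply/existsP.
have Hn : #|K| < #|Q|.+1 by rewrite ltnS max_card.
exists (Ordinal Hn); apply/existsP; exists [tuple f i | i < #|K|.+1].
rewrite !tnth_mktuple /= f0 fK !eqxx /=; apply/andP; split.
  by apply/forallP=> i; rewrite tnth_mktuple; apply: fin; rewrite -ltnS.
apply/forallP=> i; have hi := ltn_ord i.
have h1 : i < #|K|.+1 by apply: ltnW.
have h2 : i.+1 < #|K|.+1 by [].
rewrite !tnth_mktuple (inordK h1) (inordK h2); exact: fS.
Qed.

Lemma diff1 (T : finType) (A B : {set T}) x : A \subset B -> B :\: A = [set x] ->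
  B = x |: A.
Proof.
move=> sub Ex; apply/setP=> z; rewrite !inE; apply/idP/idP.
  move=> zi; case: (boolP (z \in A)) => [_|zn]; first by rewrite orbT.
  have : z \in B :\: A by rewrite inE zn zi.
  by rewrite Ex inE => ->.
case/orP => [/eqP ->|/(subsetP sub)//].
have : x \in B :\: A by rewrite Ex set11.
by rewrite inE => /andP [].
Qed.

Lemma Afam_reach (Q : finType) (R : {set rule Q}) K : K \in Afam R -> reach R K.
Proof.
rewrite inE => /existsP [n /existsP [Ys /and4P [/eqP Y0 /eqP YK /forallP Kin /forallP St]]].
suff H : forall i, i <= n -> reach R (tnth Ys (inord i)).
  have := H n (leqnn n).
  suff -> : (inord n : 'I_n.+1) = ord_max by rewrite YK.
  by apply: val_inj; rewrite /= inordK.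
elim=> [_|i IH Hi].
  suff -> : (inord 0 : 'I_n.+1) = ord0 by rewrite Y0; exact: reach0.
  by apply: val_inj; rewrite /= inordK.
have := St (Ordinal Hi); rewrite /step /= => /andP [sub /cards1P [x Ex]].
have xin : x \in tnth Ys (inord i.+1) :\: tnth Ys (inord i) by rewrite Ex set11.
move: xin; rewrite inE => /andP [xn xi].
have -> : tnth Ys (inord i.+1) = x |: tnth Ys (inord i).
  exact: diff1 sub Ex.
apply: reachS => //; first by apply: IH; exact: ltnW.
have <- : tnth Ys (inord i.+1) = x |: tnth Ys (inord i).
  exact: diff1 sub Ex.
exact: Kin.
Qed.


Lemma meet_mono (Q : finType) (A Y Y' : {set Q}) :
  Y \subset Y' -> Y :&: A != set0 -> Y' :&: A != set0.
Proof.
move=> s; apply: contra => /eqP H; rewrite -subset0 -H; exact: setSI.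
Qed.

Lemma accepts_U (Q : finType) (r : rule Q) Y Z :
  accepts r Y -> accepts r Z -> accepts r (Y :|: Z).
Proof.
rewrite /accepts inE => aY aZ; apply/implyP => /orP [qY|qZ].
  by apply: meet_mono (implyP aY qY); apply: subsetUl.
by apply: meet_mono (implyP aZ qZ); apply: subsetUr.
Qed.

Lemma Kfam_U (Q : finType) (R : {set rule Q}) Y Z :
  Y \in Kfam R -> Z \in Kfam R -> Y :|: Z \in Kfam R.
Proof.
rewrite !inE => /forall_inP HY /forall_inP HZ; apply/forall_inP => r rR.
by apply: accepts_U; [apply: HY|apply: HZ].
Qed.

Lemma Afam0 (Q : finType) (R : {set rule Q}) : set0 \in Afam R.
Proof. apply: reach_Afam; exact: reach0. Qed.

Lemma AfamS (Q : finType) (R : {set rule Q}) Y x :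
  Y \in Afam R -> x |: Y \in Kfam R -> x |: Y \in Afam R.
Proof.
move=> /Afam_reach rY xK; case: (boolP (x \in Y)) => xY.
  have -> : x |: Y = Y by apply/setUidPr; rewrite sub1set.
  by apply: reach_Afam.
by apply: reach_Afam; apply: reachS.
Qed.

Lemma Afam_K (Q : finType) (R : {set rule Q}) Y : Y \in Afam R -> Y \in Kfam R.
Proof. by move=> /Afam_reach /reach_K. Qed.

Lemma Afam_U (Q : finType) (R : {set rule Q}) Y Z :
  Y \in Afam R -> Z \in Afam R -> Y :|: Z \in Afam R.
Proof.
move=> YF /Afam_reach; elim=> [|Z' x rZ IH xZ xK]; first by rewrite setU0.
rewrite setUCA; apply: AfamS => //.
rewrite -setUCA; apply: Kfam_U => //; exact: Afam_K.
Qed.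

Lemma Afam_aug (Q : finType) (R : {set rule Q}) Y Z :
  Y \in Afam R -> Z \in Afam R -> ~~ (Z \subset Y) ->
  exists2 x, x \in Z :\: Y & x |: Y \in Afam R.
Proof.
move=> YF /Afam_reach; elim=> [|Z' z rZ IH zZ zK]; first by rewrite sub0set.
case: (boolP (Z' \subset Y)) => sZ; last first.
  move=> _; have [x xin xF] := IH sZ; exists x => //.
  by move: xin; rewrite !inE => /andP [-> ->]; rewrite orbT.
move=> nsub; have zY : z \notin Y.
  by apply: contra nsub => zY; rewrite subUset sub1set zY.
exists z; first by rewrite !inE eqxx zY.
have -> : z |: Y = Y :|: (z |: Z') by rewrite setUCA (setUidPl sZ).
by apply: Afam_U => //; apply: reach_Afam; apply: reachS.
Qed.


Lemma dualE (Q : finType) (F : {set {set Q}}) (W : {set Q}) : (~: W \in dualfam F) = (W \in F).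
Proof.
apply/imsetP/idP => [[X XF /setC_inj ->] //| WF]; by exists W.
Qed.

Lemma tau_sub (Q : finType) (F : {set {set Q}}) (C : {set Q}) : C \subset tau F C.
Proof. by apply/bigcapsP => Z /andP [_ ->]. Qed.

Lemma tau_min (Q : finType) (F : {set {set Q}}) (C Z : {set Q}) :
  Z \in dualfam F -> C \subset Z -> tau F C \subset Z.
Proof. by move=> ZF CZ; apply: bigcap_inf; rewrite ZF CZ. Qed.

Lemma tau_dual (Q : finType) (F : {set {set Q}}) (C : {set Q}) :
  set0 \in F -> (forall Y Z, Y \in F -> Z \in F -> Y :|: Z \in F) ->
  tau F C \in dualfam F.
Proof.
move=> F0 FU; rewrite /tau; apply: (big_ind (fun Z => Z \in dualfam F)).
- by rewrite -setC0 dualE.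
- move=> A B; rewrite -[A]setCK -[B]setCK !dualE -setCU dualE; exact: FU.
- by move=> Z /andP [].
Qed.

Lemma compl_del (Q : finType) (T : {set Q}) x : T :\ x = ~: (x |: ~: T).
Proof. by apply/setP=> z; rewrite !inE negb_or negbK andbC. Qed.

Lemma compl_del2 (Q : finType) (T : {set Q}) x s :
  T :\: [set x; s] = ~: (s |: (x |: ~: T)).
Proof.
apply/setP=> z; rewrite !inE.
by case: (z == x); case: (z == s); case: (z \in T).
Qed.

Lemma crit_accepts (Q : finType) (F : {set {set Q}}) A q X :
  set0 \in F -> (forall Y Z, Y \in F -> Z \in F -> Y :|: Z \in F) ->
  (forall Y Z, Y \in F -> Z \in F -> ~~ (Z \subset Y) ->
     exists2 x, x \in Z :\: Y & x |: Y \in F) ->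
  critical F (A, q) -> X \in F -> accepts (A, q) X.
Proof.
move=> F0 FU Faug /and3P [/= qA nT _] XF.
set T := tau F (q |: A) in nT *.
have Tc : T \in dualfam F by apply: tau_dual.
have YF : ~: T \in F by rewrite -dualE setCK.
have CT : q |: A \subset T by apply: tau_sub.
have qT : q \in T by apply: (subsetP CT); rewrite setU11.
rewrite /accepts /=; apply/implyP => qX; apply/negP => /eqP XA0.
have ZF := FU _ _ XF YF.
have nsub : ~~ (X :|: ~: T \subset ~: T).
  by apply/negP => /subsetP /(_ q); rewrite !inE qX qT => /(_ isT).
have [x xin xF] := Faug _ _ YF ZF nsub.
move: xin; rewrite !inE negbK => /andP [xT xXY].
have xX : x \in X by move: xXY; rewrite xT orbF.
have D : T :\ x \in dualfam F by rewrite compl_del dualE.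
case: (eqVneq x q) => [exq|nxq].
  by move: nT; rewrite -exq D.
have xA : x \notin A.
  apply/negP => xA; have : x \in X :&: A by rewrite inE xX xA.
  by rewrite XA0 inE.
have : q |: A \subset T :\ x.
  apply/subsetP => z zC; rewrite inE (subsetP CT _ zC) andbT.
  by move: zC; rewrite !inE => /orP [/eqP ->|zA]; [rewrite eq_sym| apply: contraNneq xA => <-].
move=> /(tau_min D) /subsetP /(_ x xT); by rewrite !inE eqxx.
Qed.


Lemma crit_reject (Q : finType) (F : {set {set Q}}) (Y : {set Q}) x :
  (forall Y Z, Y \in F -> Z \in F -> ~~ (Z \subset Y) ->
     exists2 x, x \in Z :\: Y & x |: Y \in F) ->
  Y \in F -> x |: Y \notin F -> exists2 r, critical F r & ~~ accepts r (x |: Y).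
Proof.
move=> Faug YF nxF.
have xY : x \notin Y.
  apply: contra nxF => xY; suff -> : x |: Y = Y by [].
  by apply/setUidPr; rewrite sub1set.
pose P := fun W : {set Q} => [&& W \in F, Y \subset W, x \notin W & x |: W \notin F].
have PY : P Y by rewrite /P YF subxx xY nxF.
case: (arg_maxnP (fun W : {set Q} => #|W|) PY) => Y' /and4P [Y'F YY' xY' nxY'] maxY'.
pose A := [set s | (s \notin x |: Y') && (s |: (x |: Y') \in F)].
have AY' : forall s, s \in A -> s \notin Y'.
  by move=> s; rewrite inE !inE negb_or => /andP [/andP [_ ->]].
have xA : x \notin A by rewrite inE setU11.
have Teq : tau F (x |: A) = ~: Y'.
  apply/eqP; rewrite eqEsubset; apply/andP; split.
    apply: tau_min; first by rewrite dualE.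
    apply/subsetP => z /setU1P [->|zA]; rewrite inE; [done | exact: AY'].

  apply/bigcapsP => Z /andP [ZF CZ].
  rewrite -[Z]setCK setCS; rewrite -[Z]setCK dualE in ZF.
  case: (boolP (~: Z \subset Y')) => // nWY.
  have [w win wF] := Faug _ _ Y'F ZF nWY.
  move: win; rewrite inE => /andP [wY' wZ].
  have wC : w \notin x |: A.
    apply/negP => /(subsetP CZ) wZ'; move: wZ; by rewrite inE wZ'.
  move: wC; rewrite !inE negb_or => /andP [wx wA].
  have nP : ~~ P (w |: Y').
    apply/negP => Pw; have := maxY' _ Pw.
    by rewrite cardsU1 wY' add1n /= ltnn.
  have xwY : x \notin w |: Y' by rewrite !inE negb_or xY' andbT eq_sym.
  have xwF : x |: (w |: Y') \in F.
    apply/negPn; apply: contra nP => h.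
    by rewrite /P wF (subset_trans YY' (subsetUr _ _)) xwY h.
  by move: wA; rewrite negb_or wx wY' /= setUCA xwF.
exists (A, x).
  rewrite /critical /= Teq xA /=; apply/andP; split.
    by rewrite compl_del setCK dualE.
  apply/forall_inP => s sA; rewrite compl_del2 setCK dualE.
  by move: sA; rewrite inE => /andP [].
rewrite /accepts /= setU11 /= negbK; apply/eqP/setP => z.
rewrite [z \in set0]inE; apply/negP; rewrite inE => /andP [zxY zA].
case/setU1P: zxY => [zx|zY].
  by move: xA; rewrite -zx zA.
by move: (AY' _ zA); rewrite (subsetP YY' _ zY).
Qed.

Lemma crit_sub (Q : finType) (F : {set {set Q}}) A1 A2 q :
  set0 \in F -> (forall Y Z, Y \in F -> Z \in F -> Y :|: Z \in F) ->
  (forall Y Z, Y \in F -> Z \in F -> ~~ (Z \subset Y) ->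
     exists2 x, x \in Z :\: Y & x |: Y \in F) ->
  critical F (A1, q) -> critical F (A2, q) ->
  tau F (q |: A1) = tau F (q |: A2) -> A1 \subset A2.
Proof.
move=> F0 FU Faug /and3P [/= qA1 _ /forall_inP h1] /and3P [/= qA2 nT2 _] Teq.
set T := tau F (q |: A2) in Teq nT2.
apply/subsetP => s sA1; apply/negPn/negP => sA2.
have Tc : T \in dualfam F by apply: tau_dual.
have YF : ~: T \in F by rewrite -dualE setCK.
have C2 : q |: A2 \subset T by apply: tau_sub.
have C1 : q |: A1 \subset T by rewrite -Teq; apply: tau_sub.
have qT : q \in T by apply: (subsetP C2); rewrite setU11.
have sT : s \in T by apply: (subsetP C1); rewrite inE sA1 orbT.
have sq : s != q by apply: contraNneq qA1 => <-.
have ZF : s |: (q |: ~: T) \in F.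
  by rewrite -dualE -compl_del2 -Teq; apply: h1.
have nsub : ~~ (s |: (q |: ~: T) \subset ~: T).
  by apply/negP => /subsetP /(_ q); rewrite !inE eqxx orbT qT => /(_ isT).
have [y yin yF] := Faug _ _ YF ZF nsub.
move: yin; rewrite !inE negbK => /andP [yT /orP [/eqP ys|/orP [/eqP yq|]]]; last first.
- by rewrite yT.
- by move: nT2; rewrite compl_del dualE -yq yF.
have D : T :\ s \in dualfam F by rewrite compl_del dualE -ys.
have : q |: A2 \subset T :\ s.
  apply/subsetP => z zC; rewrite inE (subsetP C2 _ zC) andbT.
  move: zC; rewrite !inE => /orP [/eqP ->|zA]; first by rewrite eq_sym.
  by apply: contraNneq sA2 => <-.
move=> /(tau_min D) /subsetP /(_ s sT); by rewrite !inE eqxx.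
Qed.


Lemma crit_wit (Q : finType) (R : {set rule Q}) A q :
  critical (Afam R) (A, q) -> exists2 r', r' \in R &
    [&& r'.2 == q, A \subset r'.1 & r'.1 \subset tau (Afam R) (q |: A)].
Proof.
move=> /and3P [/= qA nT /forall_inP hs].
set T := tau (Afam R) (q |: A) in nT hs *.
have Tc : T \in dualfam (Afam R).
  by apply: tau_dual; [exact: Afam0 | exact: Afam_U].
have YF : ~: T \in Afam R by rewrite -dualE setCK.
have nqF : q |: ~: T \notin Afam R by rewrite -dualE -compl_del.
have nK : q |: ~: T \notin Kfam R by apply: contra nqF; apply: AfamS.
move: nK; rewrite inE => /forall_inPn [[A' q'] rR nacc].
exists (A', q') => //=.
move: nacc; rewrite /accepts /= negb_imply negbK => /andP [q'in /eqP disj].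
have q'q : q' = q.
  case/setU1P: q'in => // q'Y.
  have := Afam_K YF; rewrite inE => /forall_inP /(_ _ rR); rewrite /accepts /= q'Y /=.
  move=> /(meet_mono (subsetUr [set q] _)); by rewrite disj eqxx.
rewrite q'q eqxx /=; apply/andP; split.
  apply/subsetP => s sA.
  have := hs s sA; rewrite compl_del2 dualE => /Afam_K.
  rewrite inE => /forall_inP /(_ _ rR); rewrite /accepts /= q'q !inE eqxx orbT /=.
  case/set0Pn => z; rewrite !inE => /andP [/orP [/eqP ->//|zin] zA'].
  have : z \in (q |: ~: T) :&: A' by rewrite !inE zin zA'.
  by rewrite disj inE.
apply/subsetP => z zA'; apply/negPn/negP => zT.
have : z \in (q |: ~: T) :&: A' by rewrite !inE zT orbT zA'.
by rewrite disj inE.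
Qed.


Theorem corollary3p7 (Q : finType) (R : {set rule Q}) :
  let Rstar := critical_rules (Afam R) in
  [/\ Afam Rstar = Afam R, #|Rstar| <= #|R| & rsize Rstar <= rsize R].
Proof.
move=> Rstar.
set F := Afam R.
have F0 : set0 \in F by exact: Afam0.
have FU : forall Y Z, Y \in F -> Z \in F -> Y :|: Z \in F by move=> *; exact: Afam_U.
have Faug : forall Y Z, Y \in F -> Z \in F -> ~~ (Z \subset Y) ->
     exists2 x, x \in Z :\: Y & x |: Y \in F by move=> *; exact: Afam_aug.
have Feq : Afam Rstar = F.
  apply/setP => K; apply/idP/idP.
    move/Afam_reach; elim=> [|Y x _ IH xY xK]; first exact: F0.
    case: (boolP (x |: Y \in F)) => // nF.
    have [r cr nacc] := crit_reject Faug IH nF.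
    move: xK; rewrite inE => /forall_inP /(_ r); rewrite inE cr => /(_ isT).
    by rewrite (negbTE nacc).
  move/Afam_reach; elim=> [|Y x rY IH xY xK]; first exact: Afam0.
  apply: AfamS => //; rewrite inE; apply/forall_inP => -[A q]; rewrite inE => cr.
  apply: crit_accepts cr _ => //.
  by apply: reach_Afam; apply: reachS.
pose P (r r' : rule Q) := [&& r'.2 == r.2, r.1 \subset r'.1 & r'.1 \subset tau F (r.2 |: r.1)].
pose phi (r : rule Q) := odflt r [pick r' in R | P r r'].
have phiP : forall r, r \in Rstar -> phi r \in R /\ P r (phi r).
  move=> [A q]; rewrite inE => cr.
  have [r' r'R Pr'] := crit_wit cr.
  rewrite /phi; case: pickP => [r'' /andP [] //|/(_ r')].
  by rewrite r'R /P /= Pr'.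
have phi_inj : {in Rstar &, injective phi}.
  move=> [A1 q1] [A2 q2] r1 r2 e.
  have [_ /and3P [/eqP e1 s1 t1]] := phiP _ r1.
  have [_ /and3P [/eqP e2 s2 t2]] := phiP _ r2.
  have c1 : critical F (A1, q1) by move: r1; rewrite inE.
  have c2 : critical F (A2, q2) by move: r2; rewrite inE.
  rewrite e in e1 s1 t1; move: e1 s1 t1 e2 s2 t2 => /= e1 s1 t1 e2 s2 t2.
  have qq : q1 = q2 by apply: etrans (esym e1) e2.
  subst q2.
  have Tc : forall C, tau F C \in dualfam F by move=> C; apply: tau_dual.
  have T12 : tau F (q1 |: A1) \subset tau F (q1 |: A2).
    apply: tau_min => //; apply/subsetP => z /setU1P [->|zA].
      by apply: (subsetP (tau_sub _ _)); rewrite setU11.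
    exact: (subsetP t2 _ (subsetP s1 _ zA)).
  have T21 : tau F (q1 |: A2) \subset tau F (q1 |: A1).
    apply: tau_min => //; apply/subsetP => z /setU1P [->|zA].
      by apply: (subsetP (tau_sub _ _)); rewrite setU11.
    exact: (subsetP t1 _ (subsetP s2 _ zA)).
  have Teq : tau F (q1 |: A1) = tau F (q1 |: A2) by apply/eqP; rewrite eqEsubset T12 T21.
  have := crit_sub F0 FU Faug c1 c2 Teq.
  have := crit_sub F0 FU Faug c2 c1 (esym Teq).
  by move=> h1 h2; congr (_, _); apply/eqP; rewrite eqEsubset h1 h2.
have sub : phi @: Rstar \subset R.
  by apply/subsetP => r' /imsetP [r rR ->]; case: (phiP r rR).
split => //.
  by rewrite -(card_in_imset phi_inj); apply: subset_leq_card.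
rewrite /rsize; apply: (@leq_trans (\sum_(r in Rstar) (#|(phi r).1| + 1))).
  apply: leq_sum => r rR; rewrite leq_add2r; apply: subset_leq_card.
  by case: (phiP r rR) => _ /and3P [].
rewrite -(big_imset (fun r' : rule Q => #|r'.1| + 1) phi_inj) /=.
rewrite [X in _ <= X](@big_setID _ _ _ _ R (phi @: Rstar)) /= (setIidPr sub).
exact: leq_addr.
Qed.
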